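(* Consider $\mathrm{USD}_p$ with $p\in[0,1]$ and let $c_s>0$ be an arbitrary constant. Let $\mathbf{x}(t_0)$ be a configuration at time $t_0$ with negative weighted bias $\Delta_{\bar{w}}(t_0) \geq c_s n$. Let $T_1 := \inf\{t \geq t_0 : x_1(t) = 0\}$. Then $\Pr[T_1 - t_0 \leq 20 c_s^{-1} n\log n] \geq 1-n^{-2}$.
   Context: Population protocol with $n$ agents, each in a state from $\{1,2,\bot\}$ (Opinion 1, Opinion 2, undecided). At each time step a scheduler picks an ordered pair $(i,j)$ of agents uniformly at random, independently of the past; only the initiator $i$ changes state. In $\mathrm{USD}_p$: if the initiator is $2$ and the responder $1$, the initiator becomes $\bot$; if the initiator is $1$ and the responder $2$, the initiator becomes $\bot$ with probability $1-p$ and otherwise stays $1$; if the initiator is $\bot$, it adopts the responder's state; otherwise nothing changes. $x_1(t),x_2(t),u(t)$ are the numbers of agents in states $1,2,\bot$ after $t$ interactions. The negative weighted bias is $\Delta_{\bar{w}}(t) := (1-p)x_2(t) - x_1(t)$. *)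

(* Defs.v *)
From HB Require Import structures.
From mathcomp Require Import all_boot all_order all_algebra.
From mathcomp Require Import reals exp.
Set Implicit Arguments. Unset Strict Implicit. Unset Printing Implicit Defensive.
Import Order.TTheory GRing.Theory Num.Theory.
Local Open Scope ring_scope.

(* Agent states: [Some true] = opinion 1, [Some false] = opinion 2,
   [None] = undecided (bot). *)
Definition agent_state := option bool.
Definition op1 : agent_state := Some true.
Definition op2 : agent_state := Some false.
Definition und : agent_state := None.

Definition config (n : nat) := {ffun 'I_n -> agent_state}.

Definition x1 n (c : config n) : nat := #|[set i | c i == op1]|.
Definition x2 n (c : config n) : nat := #|[set i | c i == op2]|.
Definition xu n (c : config n) : nat := #|[set i | c i == und]|.

Section USD.
Variable R : realType.

(* USD_p local rule: probability that an initiator in state [a], interacting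
   with a responder in state [b], ends in state [s']. *)
Definition usd_rule (p : R) (a b s' : agent_state) : R :=
  if (a == op2) && (b == op1) then (s' == und)%:R
  else if (a == op1) && (b == op2) then
    (if s' == und then 1 - p else if s' == op1 then p else 0)
  else if a == und then (s' == b)%:R
  else (s' == a)%:R.

(* One-step transition kernel of the configuration chain: the scheduler picks
   an ordered pair (i, j) of distinct agents uniformly at random; only the
   initiator i may change state. *)
Definition usd_kernel (p : R) n (c c' : config n) : R :=
  \sum_(i : 'I_n) \sum_(j : 'I_n | j != i)
     ((n * n.-1)%:R)^-1 * usd_rule p (c i) (c j) (c' i)
       * ([forall k : 'I_n, (k != i) ==> (c' k == c k)])%:R.

Definition path_prob (p : R) n (c0 : config n) K
    (w : {ffun 'I_K.+1 -> config n}) : R :=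
  (w ord0 == c0)%:R *
  \prod_(t < K) usd_kernel p (w (inord t)) (w (inord t.+1)).

(* Pr[ T_1 - t_0 <= K ] where T_1 = inf { t >= t_0 : x_1(t) = 0 } and the
   chain is at configuration c0 at time t_0 (time-homogeneous, so we shift
   t_0 to 0): the probability that x_1 hits 0 during steps 0..K. *)
Definition hit_x1_zero_prob (p : R) n (c0 : config n) (K : nat) : R :=
  \sum_(w : {ffun 'I_K.+1 -> config n} | [exists t : 'I_K.+1, x1 (w t) == 0%N])
     path_prob p c0 w.

End USD.

(* Main.v *)
Require Import Defs.
From HB Require Import structures.
From mathcomp Require Import all_boot all_order all_algebra.
From mathcomp Require Import reals sequences exp.
From mathcomp Require Import ring lra.
Import Order.TTheory GRing.Theory Num.Theory.
Local Open Scope ring_scope.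
Set Implicit Arguments. Unset Strict Implicit. Unset Printing Implicit Defensive.

Section Comb.
Variable R : realType.
Variable n : nat.
Implicit Types c : config n.

Lemma sum_pred1 (T : finType) (x : T) (G : T -> R) :
  \sum_(y : T) (y == x)%:R * G y = G x.
Proof.
rewrite (bigD1 x) //= eqxx mul1r big1 ?addr0 // => y /negPf ->.
by rewrite mul0r.
Qed.

Lemma sum_states (F : agent_state -> R) :
  \sum_(s : agent_state) F s = F op1 + F op2 + F und.
Proof.
rewrite (bigD1 op1) //= (bigD1 op2) //= (bigD1 und) //= big1 ?addr0 ?addrA //.
by case=> [[]|].
Qed.

Definition cntR c (a : agent_state) : R := \sum_(k : 'I_n) (c k == a)%:R.

Lemma card_cntR c a : (#|[set k | c k == a]|)%:R = cntR c a.
Proof.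
rewrite /cntR -sum1_card natr_sum big_mkcond /=.
by apply: eq_bigr => k _; rewrite inE; case: (c k == a).
Qed.

Lemma sum_by_state c (h : agent_state -> R) :
  \sum_(i : 'I_n) h (c i) =
  (x1 c)%:R * h op1 + (x2 c)%:R * h op2 + (xu c)%:R * h und.
Proof.
rewrite /x1 /x2 /xu !card_cntR /cntR.
transitivity (\sum_(i : 'I_n) \sum_(a : agent_state) (c i == a)%:R * h a).
  apply: eq_bigr => i _.
  under eq_bigr do rewrite eq_sym.
  by rewrite sum_pred1.
rewrite exchange_big /= sum_states !mulr_suml.
by [].
Qed.

Lemma count_sum c : (x1 c)%:R + (x2 c)%:R + (xu c)%:R = n%:R :> R.
Proof.
have := sum_by_state c (fun _ => 1).
rewrite !mulr1 => <-.
by rewrite sumr_const card_ord.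
Qed.

Definition upd c (i : 'I_n) (s : agent_state) : config n :=
  [ffun k => if k == i then s else c k].

Lemma cntR_upd c i s a :
  cntR (upd c i s) a = cntR c a - (c i == a)%:R + (s == a)%:R.
Proof.
rewrite /cntR (bigD1 i) //= [in RHS](bigD1 i) //= ffunE eqxx.
have -> : \sum_(k < n | k != i) ((upd c i s) k == a)%:R =
          \sum_(k < n | k != i) (c k == a)%:R :> R.
  by apply: eq_bigr => k /negPf kn; rewrite ffunE kn.
ring.
Qed.

Definition d1 (a s : agent_state) : R :=
  match a, s with
  | Some true, Some true => 0
  | Some true, _ => -1
  | _, Some true => 1
  | _, _ => 0 end.
Definition d2 (a s : agent_state) : R :=
  match a, s with
  | Some false, Some false => 0
  | Some false, _ => -1
  | _, Some false => 1
  | _, _ => 0 end.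

Lemma x1_upd c i s : (x1 (upd c i s))%:R = (x1 c)%:R + d1 (c i) s :> R.
Proof.
rewrite /x1 !card_cntR cntR_upd.
by case: (c i) => [[]|]; case: s => [[]|] /=; rewrite ?subr0 ?addr0 ?subrK ?add0r.
Qed.

Lemma x2_upd c i s : (x2 (upd c i s))%:R = (x2 c)%:R + d2 (c i) s :> R.
Proof.
rewrite /x2 !card_cntR cntR_upd.
by case: (c i) => [[]|]; case: s => [[]|] /=; rewrite ?subr0 ?addr0 ?subrK ?add0r.
Qed.

Lemma upd_eq c i s (c' : config n) :
  (c' == upd c i s) = (s == c' i) && [forall k, (k != i) ==> (c' k == c k)].
Proof.
apply/idP/idP.
  move/eqP->; rewrite ffunE !eqxx /=; apply/forallP => k; apply/implyP.
  by move/negPf; rewrite ffunE => ->.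
case/andP => /eqP -> /forallP H; apply/eqP/ffunP => k; rewrite ffunE.
case: eqP => [->|/eqP ne] //.
exact/eqP/(implyP (H k) ne).
Qed.

Lemma upd_sum c i (g : agent_state -> config n -> R) :
  \sum_(c' : config n) ([forall k, (k != i) ==> (c' k == c k)])%:R * g (c' i) c'
  = \sum_(s : agent_state) g s (upd c i s).
Proof.
transitivity (\sum_(s : agent_state) \sum_(c' : config n) (c' == upd c i s)%:R * g s c');
  last by apply: eq_bigr => s _; rewrite sum_pred1.
rewrite exchange_big /=; apply: eq_bigr => c' _; symmetry.
transitivity (\sum_(s : agent_state) (s == c' i)%:R *
   (([forall k, (k != i) ==> (c' k == c k)])%:R * g s c')).
  apply: eq_bigr => s _; rewrite upd_eq.
  by case: (s == c' i); case: [forall k, _]; rewrite /= ?mul0r ?mul1r.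
by rewrite sum_pred1.
Qed.

End Comb.

Section Kern.
Variable R : realType.
Variable p : R.
Variable n : nat.
Implicit Types c : config n.

Lemma kernel_sum c (f : config n -> R) :
  \sum_(c' : config n) usd_kernel p c c' * f c' =
  ((n * n.-1)%:R)^-1 * \sum_(i : 'I_n) \sum_(j : 'I_n | j != i)
      \sum_(s : agent_state) usd_rule p (c i) (c j) s * f (upd c i s).
Proof.
rewrite /usd_kernel.
under eq_bigr do rewrite mulr_suml.
rewrite exchange_big mulr_sumr /=; apply: eq_bigr => i _.
under eq_bigr do rewrite mulr_suml.
rewrite exchange_big mulr_sumr /=; apply: eq_bigr => j _.
rewrite mulr_sumr.
pose g := (fun s c' => ((n * n.-1)%:R)^-1 * usd_rule p (c i) (c j) s * f c').
transitivity (\sum_(s : agent_state) g s (upd c i s));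
  last by apply: eq_bigr => s _; rewrite /g mulrA.
rewrite -upd_sum; apply: eq_bigr => c' _; rewrite /g; ring.
Qed.

Lemma offdiag_sum (H : agent_state -> agent_state -> R) c :
  \sum_(i : 'I_n) \sum_(j : 'I_n | j != i) H (c i) (c j) =
  \sum_(i : 'I_n) \sum_(j : 'I_n) H (c i) (c j) - \sum_(i : 'I_n) H (c i) (c i).
Proof.
rewrite -sumrB; apply: eq_bigr => i _.
by rewrite [X in _ = X - _](bigD1 i) //= addrAC subrr add0r.
Qed.

Definition Eform (F : R -> R -> R) (X1 X2 U : R) : R :=
  F X1 X2 + ((X1 + X2 + U) * (X1 + X2 + U - 1))^-1 *
   (X1 * X2 * (F X1 (X2 - 1) - F X1 X2)
    + (1 - p) * X1 * X2 * (F (X1 - 1) X2 - F X1 X2)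
    + U * X1 * (F (X1 + 1) X2 - F X1 X2)
    + U * X2 * (F X1 (X2 + 1) - F X1 X2)).

Lemma expect c (F : R -> R -> R) : (1 < n)%N ->
  \sum_(c' : config n) usd_kernel p c c' * F (x1 c')%:R (x2 c')%:R =
  Eform F (x1 c)%:R (x2 c)%:R (xu c)%:R.
Proof.
move=> n1.
rewrite kernel_sum.
set X1 : R := (x1 c)%:R; set X2 : R := (x2 c)%:R; set U : R := (xu c)%:R.
pose G (a b : agent_state) := \sum_(s : agent_state) usd_rule p a b s * F (X1 + @d1 R a s) (X2 + @d2 R a s).
transitivity (((n * n.-1)%:R)^-1 * \sum_(i : 'I_n) \sum_(j : 'I_n | j != i) G (c i) (c j)).
  congr (_ * _); apply: eq_bigr => i _; apply: eq_bigr => j _; apply: eq_bigr => s _.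
  by rewrite x1_upd x2_upd.
rewrite (offdiag_sum G c).
under eq_bigr do rewrite (sum_by_state c (G _)).
rewrite !(sum_by_state c (fun a => G a a)).
rewrite (sum_by_state c (fun a => (x1 c)%:R * G a op1 + (x2 c)%:R * G a op2 + (xu c)%:R * G a und)).
rewrite -/X1 -/X2 -/U /G !sum_states /usd_rule /= ?addr0.
have hn : n%:R = X1 + X2 + U by rewrite count_sum.
have -> : (n * n.-1)%:R = (X1 + X2 + U) * (X1 + X2 + U - 1) :> R.
  by rewrite natrM -subn1 natrB ?hn // ltnW.
rewrite /Eform.
have hN : (X1 + X2 + U) * (X1 + X2 + U - 1) != 0.
  rewrite -hn mulf_eq0 negb_or pnatr_eq0 -(natrB _ (ltnW n1)) pnatr_eq0 subn1.
  by case: n n1 => [|[|m]].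
field; move: hN; rewrite mulf_eq0 negb_or andbC; exact.
Qed.

End Kern.

Section Paths.
Variable R : realType.
Variable p : R.
Variable n : nat.
Implicit Types c : config n.

Definition Pg (g : pred (config n)) K c0 : R :=
  \sum_(w : {ffun 'I_K.+1 -> config n} | [forall t, g (w t)]) path_prob p c0 w.

Lemma P_zero g c0 : Pg g 0 c0 = (g c0)%:R.
Proof.
rewrite /Pg big_mkcond /=.
transitivity (\sum_(w : {ffun 'I_1 -> config n}) ((w == [ffun=> c0])%:R * (g c0)%:R : R));
  last by rewrite sum_pred1.
apply: eq_bigr => w _.
rewrite /path_prob big_ord0 mulr1.
have E : (w == [ffun=> c0]) = (w ord0 == c0).
  apply/eqP/eqP => [->|h]; first by rewrite ffunE.
  by apply/ffunP => t; rewrite ffunE ord1 h.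
have F : [forall t, g (w t)] = g (w ord0).
  by apply/forallP/idP => [H|H t]; [exact: H | rewrite ord1].
rewrite E F; case: eqP => [->|_]; last by rewrite !mul0r; case: ifP.
by case: (g c0); rewrite ?mul1r.
Qed.

Definition consf K c0 (w : {ffun 'I_K.+1 -> config n}) : {ffun 'I_K.+2 -> config n} :=
  [ffun t : 'I_K.+2 => if nat_of_ord t is k.+1 then w (inord k) else c0].
Definition tailf K (w : {ffun 'I_K.+2 -> config n}) : {ffun 'I_K.+1 -> config n} :=
  [ffun t : 'I_K.+1 => w (inord t.+1)].

Lemma consf_S K c0 w k : (k < K.+1)%N -> @consf K c0 w (inord k.+1) = w (inord k).
Proof. by move=> hk; rewrite ffunE inordK. Qed.

Lemma consf_0 K c0 w : @consf K c0 w (inord 0) = c0.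
Proof. by rewrite ffunE inordK. Qed.

Lemma tailf_consf K c0 w : tailf (@consf K c0 w) = w.
Proof.
by apply/ffunP => t; rewrite ffunE consf_S // inord_val.
Qed.

Lemma consf_tailf K c0 (w : {ffun 'I_K.+2 -> config n}) : w ord0 = c0 -> @consf K c0 (tailf w) = w.
Proof.
move=> h; apply/ffunP => t; rewrite ffunE.
case: t => [[|k] hk] /=.
  by rewrite -h; congr (w _); apply: val_inj.
rewrite ffunE inordK //; congr (w _); apply: val_inj; rewrite /= inordK //.
Qed.

Lemma P_succ g K c0 :
  Pg g K.+1 c0 = (g c0)%:R * \sum_(c' : config n) usd_kernel p c0 c' * Pg g K c'.
Proof.
rewrite /Pg /path_prob.
rewrite (bigID (fun w : {ffun 'I_K.+2 -> config n} => w ord0 == c0)) /=.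
rewrite [X in _ + X]big1 ?addr0; last by move=> w /andP [_ /negPf ->]; rewrite mul0r.
under eq_bigr => w /andP [_ /eqP ->] do rewrite eqxx mul1r.
rewrite (reindex_onto (@consf K c0) (@tailf K)); last first.
  by move=> w /andP [_ /eqP]; apply: consf_tailf.
have cond : forall w' : {ffun 'I_K.+1 -> config n},
   ([forall t, g (consf c0 w' t)] && (consf c0 w' ord0 == c0)) && (tailf (consf c0 w') == w')
   = g c0 && [forall t, g (w' t)].
  move=> w'; rewrite tailf_consf eqxx andbT ffunE eqxx andbT.
  apply/forallP/andP => [H|[H1 H2] t].
    split; first by have := H ord0; rewrite ffunE.
    by apply/forallP => t; have := H (inord t.+1); rewrite consf_S // inord_val.
  rewrite ffunE; case: t => [[|k] hk] //=.
  exact: (forallP H2).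
rewrite (eq_bigl _ _ cond).
have prod : forall w' : {ffun 'I_K.+1 -> config n},
  \prod_(t < K.+1) usd_kernel p (consf c0 w' (inord t)) (consf c0 w' (inord t.+1))
  = usd_kernel p c0 (w' ord0) *
    \prod_(t < K) usd_kernel p (w' (inord t)) (w' (inord t.+1)).
  move=> w'; rewrite big_ord_recl consf_0 /= consf_S //.
  have -> : (inord 0 : 'I_K.+1) = ord0 by apply: val_inj; rewrite /= inordK.
  congr (_ * _); apply: eq_bigr => i _.
  by rewrite /bump leq0n add1n consf_S ?consf_S // ?ltnS ?ltn_ord // ltnW.
rewrite (eq_bigr _ (fun w' _ => prod w')).
case: (g c0) => /=; last by rewrite mul0r big_pred0.
rewrite mul1r.
under [RHS]eq_bigr do rewrite mulr_sumr.
rewrite [RHS]exchange_big /=; apply: eq_bigr => w _.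
transitivity (\sum_(c' : config n) (c' == w ord0)%:R *
   (usd_kernel p c0 c' * \prod_(t < K) usd_kernel p (w (inord t)) (w (inord t.+1))));
  first by rewrite sum_pred1.
apply: eq_bigr => c' _; rewrite eq_sym; ring.
Qed.

End Paths.

Section Super.
Variable R : realType.
Variable p : R.
Variable n : nat.
Hypothesis hp : 0 <= p <= 1.
Hypothesis n1 : (1 < n)%N.
Implicit Types c : config n.

Lemma rule_ge0 a b s : 0 <= usd_rule p a b s.
Proof.
case/andP: hp => p0 p1.
rewrite /usd_rule; repeat case: ifP => _ //; rewrite ?subr_ge0 //.
Qed.

Lemma kernel_ge0 c c' : 0 <= usd_kernel p c c'.
Proof.
apply: sumr_ge0 => i _; apply: sumr_ge0 => j _.
by rewrite !mulr_ge0 // ?invr_ge0 // rule_ge0.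
Qed.

Lemma kernel_sum1 c : \sum_(c' : config n) usd_kernel p c c' = 1.
Proof.
have := expect p c (fun _ _ => (1 : R)) n1.
rewrite /Eform !subrr !mulr0 !addr0 mulr0 addr0 => <-.
by apply: eq_bigr => c' _; rewrite mulr1.
Qed.

Lemma P_total K c : Pg p predT K c = 1.
Proof.
elim: K c => [|K IH] c; first by rewrite P_zero.
rewrite P_succ mul1r -(kernel_sum1 c); apply: eq_bigr => c' _.
by rewrite IH mulr1.
Qed.

Lemma hit_eq K c0 :
  hit_x1_zero_prob p c0 K = 1 - Pg p (fun c => x1 c != 0%N) K c0.
Proof.
rewrite -(P_total K c0) /Pg /hit_x1_zero_prob.
rewrite [X in X - _](bigID (fun w : {ffun 'I_K.+1 -> config n} =>
                                   [exists t, x1 (w t) == 0%N])) /=.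
have E1 : forall w : {ffun 'I_K.+1 -> config n},
    [forall t, predT (w t)] && [exists t, x1 (w t) == 0%N] = [exists t, x1 (w t) == 0%N].
  by move=> w; apply/andP/idP => [[]//|H]; split=> //; apply/forallP.
have E2 : forall w : {ffun 'I_K.+1 -> config n},
    [forall t, predT (w t)] && ~~ [exists t, x1 (w t) == 0%N] = [forall t, x1 (w t) != 0%N].
  move=> w; rewrite negb_exists.
  by apply/andP/idP => [[]//|H]; split=> //; apply/forallP.
rewrite (eq_bigl _ _ E1) (eq_bigl _ _ E2).
by rewrite addrK.
Qed.

Lemma super (g : pred (config n)) (U : nat -> config n -> R) K :
  (forall t c, 0 <= U t c) ->
  (forall c, g c -> 1 <= U K c) ->
  (forall t c, (t < K)%N -> g c ->
      \sum_(c' : config n) usd_kernel p c c' * U t.+1 c' <= U t c) ->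
  forall m c, (m <= K)%N -> Pg p g m c <= U (K - m)%N c.
Proof.
move=> U0 UK Ustep; elim=> [|m IH] c hm.
  by rewrite P_zero subn0; case: (boolP (g c)) => h; [exact: UK | exact: U0].
rewrite P_succ; case: (boolP (g c)) => h; last by rewrite mul0r U0.
rewrite mul1r.
have hK : (K - m.+1 < K)%N by rewrite ltn_subrL; apply/andP; split => //; apply: leq_trans hm.
apply: le_trans (Ustep _ _ hK h).
rewrite subnSK //.
apply: ler_sum => c' _; apply: ler_wpM2l; first exact: kernel_ge0.
by apply: IH; apply: ltnW.
Qed.

End Super.

Lemma expR_le2 (R : realType) (y : R) : y <= 1/2 -> expR y <= 1 + y + 2 * y ^+ 2.
Proof.
move=> hy.
have h1 : 0 < 1 - y by lra.
have h : 1 - y <= expR (- y) by have := expR_ge1Dx (- y).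
have -> : expR y = (expR (- y))^-1 by rewrite expRN invrK.
apply: (@le_trans _ _ ((1 - y)^-1)).
  by rewrite lef_pV2 ?posrE ?expR_gt0.
rewrite -div1r ler_pdivrMr //.
have : 0 <= y ^+ 2 * (1 - 2 * y) by apply: mulr_ge0; [exact: sqr_ge0 | lra].
move=> H; nra.
Qed.

Section Steps.
Variable R : realType.
Variable p : R.

Definition PhiF : R -> R -> R := fun X1 X2 => X1 / X2.

Lemma Phi_step (cs X1 X2 U : R) :
  0 <= p <= 1 -> 0 < cs -> 0 <= X1 -> 0 <= X2 -> 0 <= U ->
  cs * (X1 + X2 + U) / 2 < (1 - p) * X2 - X1 ->
  4 / cs <= cs * (X1 + X2 + U) / 2 - 1 ->
  Eform p PhiF X1 X2 U <=
  (1 - cs * (X1 + X2 + U) / (4 * ((X1 + X2 + U) * (X1 + X2 + U - 1)))) * PhiF X1 X2.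
Proof.
move=> /andP [p0 p1] cs0 X10 X20 U0 hD hn.
set S := X1 + X2 + U in hD hn *.
have hcs : 0 < 4 / cs by rewrite divr_gt0.
have X2big : cs * S / 2 < X2 by nra.
have a0 : 4 / cs <= X2 - 1 by lra.
have a1 : 0 < X2 - 1 by lra.
have S0 : 0 < S by rewrite /S; lra.
have S1 : 0 < S - 1 by rewrite /S; lra.
have key : X1 / (X2 - 1) + U / (X2 + 1) <= cs * S / 4.
  have e1 : U / (X2 + 1) <= U / (X2 - 1).
    apply: ler_wpM2l => //; rewrite lef_pV2 ?posrE; lra.
  apply: (le_trans (lerD (lexx _) e1)).
  rewrite -mulrDl ler_pdivrMr //.
  have : 4 <= cs * (X2 - 1).
    by move: a0; rewrite ler_pdivrMr // mulrC.
  move=> h4.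
  have : 0 <= S * (cs * (X2 - 1) - 4) by apply: mulr_ge0; lra.
  rewrite /S => hh; nra.
rewrite /Eform /PhiF.
set B := (X1 * X2 * (X1 / (X2 - 1) - X1 / X2) + (1 - p) * X1 * X2 * ((X1 - 1) / X2 - X1 / X2) +
     U * X1 * ((X1 + 1) / X2 - X1 / X2) + U * X2 * (X1 / (X2 + 1) - X1 / X2)).
have BE : B = X1 / X2 * (- ((1 - p) * X2 - X1) + X1 / (X2 - 1) + U / (X2 + 1)).
  rewrite /B; field; apply/and3P; split; apply/eqP; lra.
have Ble : B <= X1 / X2 * (- (cs * S / 4)).
  rewrite BE; apply: ler_wpM2l; first by rewrite divr_ge0.
  lra.
have SS0 : 0 < S * (S - 1) by rewrite mulr_gt0.
apply: (@le_trans _ _ (X1 / X2 + (S * (S - 1))^-1 * (X1 / X2 * - (cs * S / 4)))).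
  by rewrite lerD2l; apply: ler_wpM2l => //; rewrite invr_ge0 ltW.
rewrite le_eqVlt; apply/orP; left; apply/eqP; field; apply/and3P; split; apply/eqP; lra.
Qed.

Definition PsiF (lam cs nR : R) : R -> R -> R :=
  fun X1 X2 => expR (lam * (cs * nR / 2 - ((1 - p) * X2 - X1))).

Lemma Psi_step (lam cs nR X1 X2 U : R) :
  0 <= p <= 1 -> 0 <= lam <= 1/2 -> 0 <= X1 -> 0 <= X2 -> 0 <= U ->
  2 <= X1 + X2 + U -> 0 <= (1 - p) * X2 - X1 ->
  Eform p (PsiF lam cs nR) X1 X2 U <= (1 + 4 * lam ^+ 2) * PsiF lam cs nR X1 X2.
Proof.
move=> /andP [p0 p1] /andP [l0 l1] X10 X20 U0 S2 D0.
set S := X1 + X2 + U in S2 *.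
set P0 := PsiF lam cs nR X1 X2.
have P0pos : 0 < P0 by rewrite /P0 /PsiF expR_gt0.
have E1 : PsiF lam cs nR X1 (X2 - 1) = P0 * expR (lam * (1 - p)).
  by rewrite /P0 /PsiF -expRD; congr expR; ring.
have E2 : PsiF lam cs nR (X1 - 1) X2 = P0 * expR (- lam).
  by rewrite /P0 /PsiF -expRD; congr expR; ring.
have E3 : PsiF lam cs nR (X1 + 1) X2 = P0 * expR lam.
  by rewrite /P0 /PsiF -expRD; congr expR; ring.
have E4 : PsiF lam cs nR X1 (X2 + 1) = P0 * expR (- (lam * (1 - p))).
  by rewrite /P0 /PsiF -expRD; congr expR; ring.
rewrite /Eform -/S -/P0 E1 E2 E3 E4.
set q := 1 - p.
have q0 : 0 <= q by rewrite /q; lra.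
have q1 : q <= 1 by rewrite /q; lra.
have b1 := expR_le2 (y := lam * q) ltac:(nra).
have b2 := expR_le2 (y := - lam) ltac:(lra).
have b3 := expR_le2 (y := lam) ltac:(lra).
have b4 := expR_le2 (y := - (lam * q)) ltac:(nra).
set a1 := expR (lam * q) in b1 *.
set a2 := expR (- lam) in b2 *.
set a3 := expR lam in b3 *.
set a4 := expR (- (lam * q)) in b4 *.
set T := X1 * X2 * (a1 - 1) + q * X1 * X2 * (a2 - 1) + U * X1 * (a3 - 1) + U * X2 * (a4 - 1).
have TE : X1 * X2 * (P0 * a1 - P0) + q * X1 * X2 * (P0 * a2 - P0) + U * X1 * (P0 * a3 - P0) +
   U * X2 * (P0 * a4 - P0) = P0 * T by rewrite /T; ring.
rewrite TE.
have h12 : 0 <= X1 * X2 by apply: mulr_ge0.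
have hq12 : 0 <= q * X1 * X2 by rewrite -mulrA; apply: mulr_ge0.
have hu1 : 0 <= U * X1 by apply: mulr_ge0.
have hu2 : 0 <= U * X2 by apply: mulr_ge0.
have T1 : T <= X1 * X2 * (lam * q + 2 * (lam * q) ^+ 2) + q * X1 * X2 * (- lam + 2 * (- lam) ^+ 2)
          + U * X1 * (lam + 2 * lam ^+ 2) + U * X2 * (- (lam * q) + 2 * (- (lam * q)) ^+ 2).
  rewrite /T; repeat apply: lerD; apply: ler_wpM2l => //; lra.
have hQ : X1 * X2 * q ^+ 2 + q * X1 * X2 + U * X1 + U * X2 * q ^+ 2 <= S * S.
  have qq : q ^+ 2 <= 1 by rewrite -(expr1n _ 2); apply: lerXn2r; rewrite ?nnegrE.
  have : X1 * X2 * q ^+ 2 <= X1 * X2 by rewrite -[leRHS]mulr1; apply: ler_wpM2l.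
  have : U * X2 * q ^+ 2 <= U * X2 by rewrite -[leRHS]mulr1; apply: ler_wpM2l.
  have : q * X1 * X2 <= X1 * X2 by rewrite -mulrA -[leRHS]mul1r; apply: ler_wpM2r.
  rewrite /S; nra.
have hS : S * S <= 2 * (S * (S - 1)) by nra.
have hUD : 0 <= lam * (U * ((1 - p) * X2 - X1)) by apply: mulr_ge0 => //; apply: mulr_ge0.
have T2 : T <= 4 * lam ^+ 2 * (S * (S - 1)).
  apply: (le_trans T1).
  have hl2 : 0 <= lam ^+ 2 by apply: sqr_ge0.
  have : 2 * lam ^+ 2 * (X1 * X2 * q ^+ 2 + q * X1 * X2 + U * X1 + U * X2 * q ^+ 2)
         <= 2 * lam ^+ 2 * (S * S) by apply: ler_wpM2l => //; nra.
  have : 2 * lam ^+ 2 * (S * S) <= 2 * lam ^+ 2 * (2 * (S * (S - 1))) by apply: ler_wpM2l => //; nra.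
  move: hUD; rewrite /q; nra.
have SS0 : 0 < S * (S - 1) by apply: mulr_gt0; lra.
apply: (@le_trans _ _ (P0 + (S * (S - 1))^-1 * (P0 * (4 * lam ^+ 2 * (S * (S - 1)))))).
  rewrite lerD2l; apply: ler_wpM2l; first by rewrite invr_ge0 ltW.
  by apply: ler_wpM2l => //; exact: ltW.
rewrite le_eqVlt; apply/orP; left; apply/eqP; field; apply/andP; split; apply/eqP; lra.
Qed.

End Steps.

Section NumB.
Variable R : realType.

Lemma e_le4 : expR 1 <= 4 :> R.
Proof.
have h := expR_le2 (y := 1/2 : R) ltac:(lra).
have -> : (1 : R) = 1/2 + 1/2 by field.
rewrite expRD.
have h0 : 0 <= expR (1/2 : R) by apply: expR_ge0.
nra.
Qed.

Lemma ln_ge1 (nR : R) : 4 <= nR -> 1 <= ln nR.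
Proof.
move=> h.
have n0 : 0 < nR by lra.
rewrite -ler_expR lnK ?posrE //.
apply: le_trans e_le4 h.
Qed.

Lemma lnsq_bound (nR cs : R) : 0 < cs -> 1 <= nR -> ((60 * 1024) / cs ^+ 3) ^+ 2 <= nR ->
  (60 * 64) * ln nR ^+ 2 <= cs ^+ 3 * nR.
Proof.
move=> cs0 n1 hM.
have n0 : 0 < nR by lra.
set s := Num.sqrt nR.
set y := Num.sqrt s.
have s0 : 0 < s by rewrite sqrtr_gt0.
have y0 : 0 < y by rewrite sqrtr_gt0.
have ss : s ^+ 2 = nR by rewrite sqr_sqrtr // ltW.
have yy : y ^+ 2 = s by rewrite sqr_sqrtr // ltW.
have ny : nR = y ^+ 4 by rewrite -ss -yy -exprM.
have lnE : ln nR = ln y *+ 4 by rewrite ny lnXn.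
have ly : ln y < y by apply: ln_sublinear.
have L0 : 0 <= ln nR by apply: ln_ge0.
have L1 : ln nR <= 4 * y by rewrite lnE mulr_natl; lra.
have L2 : ln nR ^+ 2 <= 16 * s.
  rewrite -yy.
  have : ln nR ^+ 2 <= (4 * y) ^+ 2 by apply: lerXn2r; rewrite ?nnegrE //; lra.
  by have -> : (4 * y) ^+ 2 = 16 * y ^+ 2 by ring.
have c3 : 0 < cs ^+ 3 by rewrite exprn_gt0.
have sM : (60 * 1024) / cs ^+ 3 <= s.
  have h : Num.sqrt (((60 * 1024) / cs ^+ 3) ^+ 2) <= s by apply: ler_wsqrtr.
  rewrite sqrtr_sqr ger0_norm in h; first exact: h.
  by apply: divr_ge0; [lra | exact: ltW].
have sM' : (60 * 1024) <= cs ^+ 3 * s.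
  by move: sM; rewrite ler_pdivrMr // [s * _]mulrC.
have : cs ^+ 3 * nR = (cs ^+ 3 * s) * s by rewrite -ss; ring.
move=> ->.
nra.
Qed.

End NumB.

Lemma pow_exp_le (R : realType) (a : R) (K : nat) : 0 <= 1 + a ->
  (1 + a) ^+ K <= expR (a * K%:R).
Proof.
move=> h; rewrite expRM_natr; apply: lerXn2r; rewrite ?nnegrE ?expR_ge0 //.
exact: expR_ge1Dx.
Qed.

Lemma term1 (R : realType) (nR cs del L Ph : R) (K : nat) :
  8 <= nR -> 0 < cs -> cs <= 1 -> del <= 1 -> cs / (4 * nR) <= del ->
  L = ln nR -> 20 * nR * L < (K%:R + 1) * cs -> 0 <= Ph -> Ph <= nR ->
  nR * (1 - del) ^+ K * Ph <= (2 * nR ^+ 2)^-1.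
Proof.
move=> n8 cs0 cs1 del1 dlo hL hK Ph0 Phn.
have nR0 : 0 < nR by lra.
have Kr0 : 0 <= K%:R :> R by apply: ler0n.
have h1 : (1 - del) ^+ K <= expR (- del * K%:R) by apply: pow_exp_le; lra.
have h2 : - del * K%:R <= 1 - 5 * L.
  have a1 : cs / (4 * nR) * K%:R <= del * K%:R by apply: ler_wpM2r.
  have a2 : 5 * L - 1 <= cs / (4 * nR) * K%:R.
    rewrite (_ : cs / (4 * nR) * K%:R = (cs * K%:R) / (4 * nR)); last by field; rewrite gt_eqF.
    rewrite ler_pdivlMr; last by lra.
    nra.
  lra.
have h3 : expR (1 - 5 * L) = expR 1 / nR ^+ 5.
  by rewrite expRB expRM_natl hL lnK // posrE.
have e4 := @e_le4 R.
have e0 : 0 <= expR 1 :> R by apply: expR_ge0.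
have : (1 - del) ^+ K <= expR 1 / nR ^+ 5.
  by rewrite -h3; apply: (le_trans h1); rewrite ler_expR.
move=> h4.
apply: (@le_trans _ _ (nR * (expR 1 / nR ^+ 5) * nR)).
  apply: ler_pM; last exact: Phn.
  - apply: mulr_ge0; [lra | apply: exprn_ge0; lra].
  - exact: Ph0.
  - by apply: ler_wpM2l => //; lra.
rewrite -subr_ge0.
have -> : (2 * nR ^+ 2)^-1 - nR * (expR 1 / nR ^+ 5) * nR = (nR - 2 * expR 1) / (2 * nR ^+ 3).
  by field; rewrite gt_eqF.
apply: divr_ge0; first lra.
apply: mulr_ge0; [lra | apply: exprn_ge0; lra].
Qed.

Lemma term2 (R : realType) (nR cs lam L Ps : R) (K : nat) :
  8 <= nR -> 0 < cs -> 0 < K%:R :> R -> lam = cs * nR / (16 * K%:R) -> L = ln nR ->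
  K%:R * cs <= 20 * nR * L -> (60 * 64) * L ^+ 2 <= cs ^+ 3 * nR ->
  0 <= Ps -> Ps <= expR (- (lam * cs * nR / 2)) ->
  (1 + 4 * lam ^+ 2) ^+ K * Ps <= (2 * nR ^+ 2)^-1.
Proof.
move=> n8 cs0 K0 hlam hL hK hL2 Ps0 hPs.
have nR0 : 0 < nR by lra.
have L0 : 0 <= L by rewrite hL; apply: ln_ge0; lra.
have h1 : (1 + 4 * lam ^+ 2) ^+ K <= expR (4 * lam ^+ 2 * K%:R).
  by apply: pow_exp_le; have := sqr_ge0 lam; lra.
apply: (@le_trans _ _ (expR (4 * lam ^+ 2 * K%:R) * expR (- (lam * cs * nR / 2)))).
  apply: ler_pM => //; first by apply: exprn_ge0; have := sqr_ge0 lam; lra.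
rewrite -expRD.
set X := cs ^+ 2 * nR ^+ 2 / (64 * K%:R).
have -> : 4 * lam ^+ 2 * K%:R + - (lam * cs * nR / 2) = - X.
  by rewrite hlam /X; field; rewrite gt_eqF.
have l2 : ln (2 * nR ^+ 2) <= L *+ 3.
  rewrite hL -lnXn // ler_ln ?posrE; first by nra.
    by apply: mulr_gt0; [lra | apply: exprn_gt0].
  by apply: exprn_gt0.
have l3 : L *+ 3 <= X.
  rewrite /X ler_pdivlMr; last by lra.
  have a1 : L * (K%:R * cs) <= L * (20 * nR * L) by apply: ler_wpM2l.
  have a2 : nR * ((60 * 64) * L ^+ 2) <= nR * (cs ^+ 3 * nR) by apply: ler_wpM2l => //; lra.
  have : 0 <= cs * (cs ^+ 2 * nR ^+ 2 - L *+ 3 * (64 * K%:R)).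
    rewrite -mulr_natl; nra.
  by rewrite pmulr_rge0 // subr_ge0.
rewrite expRN lef_pV2 ?posrE ?expR_gt0 //; last by apply: mulr_gt0; [lra | apply: exprn_gt0].
rewrite -[X in X <= _]lnK ?posrE; last by apply: mulr_gt0; [lra | apply: exprn_gt0].
by rewrite ler_expR; apply: le_trans l2 l3.
Qed.

Lemma Eform_lin (R : realType) (p A B : R) (F G : R -> R -> R) X1 X2 U :
  Eform p (fun a b => A * F a b + B * G a b) X1 X2 U =
  A * Eform p F X1 X2 U + B * Eform p G X1 X2 U.
Proof. rewrite /Eform; ring. Qed.

Theorem lemma14 (R : realType) (p cs : R) :
  0 <= p <= 1 -> 0 < cs ->
  exists n0 : nat, forall n : nat, (n0 <= n)%N ->
  forall (c0 : config n) (K : nat),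
    cs * n%:R <= (1 - p) * (x2 c0)%:R - (x1 c0)%:R ->
    (* K = floor (20 c_s^{-1} n log n) *)
    K%:R <= 20 / cs * n%:R * ln (n%:R : R) < K.+1%:R ->
    1 - ((n%:R : R) ^+ 2)^-1 <= hit_x1_zero_prob p c0 K.
Proof.
move=> hp cs0.
have /andP [p0 p1] := hp.
set M : R := 2 / cs * (1 + 4 / cs) + ((60 * 1024) / cs ^+ 3) ^+ 2.
have icsp : 0 < 4 / cs by rewrite divr_gt0.
have M1 : 0 <= 2 / cs * (1 + 4 / cs) by apply: mulr_ge0; [rewrite divr_ge0 // ltW | clear -icsp; lra].
have M2 : 0 <= ((60 * 1024) / cs ^+ 3) ^+ 2 by apply: sqr_ge0.
have M0 : 0 <= M by rewrite /M; clear -M1 M2; lra.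
exists (Num.Def.archi_bound M + 8)%N.
move=> n hn c0 K hD hK.
set nR : R := n%:R.
have nM : M < nR.
  apply: (lt_le_trans (archi_boundP M0)); rewrite ler_nat.
  by apply: leq_trans hn; rewrite leq_addr.
have n8 : 8 <= nR.
  by rewrite /nR ler_nat; apply: leq_trans hn; rewrite leq_addl.
have n1 : (1 < n)%N by rewrite -(ltr_nat R) -/nR; clear -n8; lra.
have cnt : forall c : config n, (x1 c)%:R + (x2 c)%:R + (xu c)%:R = nR.
  by move=> c; rewrite count_sum.
have pos : forall c : config n, [/\ 0 <= (x1 c)%:R :> R, 0 <= (x2 c)%:R :> R & 0 <= (xu c)%:R :> R].
  by move=> c; split; apply: ler0n.
have cs1 : cs <= 1.
  have [a b c] := pos c0; have := cnt c0.
  have : 0 <= p * (x2 c0)%:R by apply: mulr_ge0.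
  move=> h1 h2; clear -h1 h2 a b c hD cs0 n8; nra.
have hM1 : 2 / cs * (1 + 4 / cs) <= nR by rewrite /M in nM; clear -nM M1 M2; lra.
have hM2 : ((60 * 1024) / cs ^+ 3) ^+ 2 <= nR by rewrite /M in nM; clear -nM M1 M2; lra.
have L1 : 1 <= ln nR by apply: ln_ge1; clear -n8; lra.
set L := ln nR in L1 hK.
case/andP: hK => hK1 hK2.
set Kr : R := K%:R in hK1 hK2.
have hK2' : 20 / cs * nR * L < Kr + 1 by rewrite /Kr natr1.
have csn0 : cs != 0 by rewrite gt_eqF.
have eK : 20 / cs * nR * L = (20 * nR * L) / cs by field.
have hKcs : Kr * cs <= 20 * nR * L.
  by move: hK1; rewrite eK ler_pdivlMr.
have hKcs2 : 20 * nR * L < (Kr + 1) * cs.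
  by move: hK2'; rewrite eK ltr_pdivrMr.
have Kr0 : 0 <= Kr by apply: ler0n.
have Kbig : 19 * nR <= Kr.
  have h1 : (Kr + 1) * cs <= Kr + 1.
    by rewrite -[leRHS]mulr1; apply: ler_wpM2l => //; clear -Kr0; lra.
  have h2 : 20 * nR <= 20 * nR * L by clear -L1 n8; nra.
  clear -hKcs2 h1 h2 n8; lra.
have K0 : 0 < Kr by clear -Kbig n8; lra.
have nR0 : 0 < nR by clear -n8; lra.
have nRn0 : nR != 0 by rewrite gt_eqF.
have nR1n0 : nR - 1 != 0 by rewrite gt_eqF //; clear -n8; lra.
have Krn0 : Kr != 0 by rewrite gt_eqF.
set lam := cs * nR / (16 * Kr).
have lam0 : 0 <= lam by rewrite /lam divr_ge0 // ?mulr_ge0 //; clear -cs0 nR0 K0; lra.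
have lam1 : lam <= 1/2.
  rewrite /lam ler_pdivrMr; last by clear -K0; lra.
  have : cs * nR <= nR by clear -cs1 nR0; nra.
  clear -Kbig nR0; lra.
set del := cs * nR / (4 * (nR * (nR - 1))).
have delE : del = cs / (4 * (nR - 1)) by rewrite /del; field; rewrite ?nRn0 ?nR1n0 ?andbT.
have del0 : 0 <= del by rewrite delE divr_ge0 //; clear -cs0 n8; lra.
have del1 : del <= 1 by rewrite delE ler_pdivrMr; clear -cs1 n8; lra.
have del_lo : cs / (4 * nR) <= del.
  rewrite delE; apply: ler_wpM2l; first by clear -cs0; lra.
  rewrite lef_pV2 ?posrE; clear -n8; lra.
pose W (t : nat) (c : config n) :=
  nR * (1 - del) ^+ (K - t)%N * PhiF (x1 c)%:R (x2 c)%:R +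
  (1 + 4 * lam ^+ 2) ^+ (K - t)%N * PsiF p lam cs nR (x1 c)%:R (x2 c)%:R.
pose U (t : nat) (c : config n) := Num.min 1 (W t c).
have Phi0 : forall c : config n, 0 <= PhiF (x1 c)%:R (x2 c)%:R :> R.
  by move=> c; rewrite /PhiF divr_ge0.
have Psi0 : forall c : config n, 0 < PsiF p lam cs nR (x1 c)%:R (x2 c)%:R.
  by move=> c; rewrite /PsiF expR_gt0.
have W0 : forall t c, 0 <= W t c.
  move=> t c; rewrite /W; apply: addr_ge0; apply: mulr_ge0 => //; last exact: ltW.
    apply: mulr_ge0; first by clear -nR0; lra.
    by apply: exprn_ge0; clear -del1; lra.
  by apply: exprn_ge0; have := sqr_ge0 lam; clear; lra.
have U0 : forall t c, 0 <= U t c by move=> t c; rewrite /U le_min ler01 W0.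
have Psi1 : forall c : config n, (1 - p) * (x2 c)%:R - (x1 c)%:R <= cs * nR / 2 ->
    1 <= PsiF p lam cs nR (x1 c)%:R (x2 c)%:R.
  move=> c hc; rewrite /PsiF; set x := lam * _.
  have : 0 <= x by apply: mulr_ge0 => //; clear -hc; lra.
  have := expR_ge1Dx x; clear; lra.
have UK : forall c : config n, x1 c != 0%N -> 1 <= U K c.
  move=> c hc; rewrite /U le_min lexx /= /W subnn !expr0 mulr1 mul1r.
  have [a b d] := pos c; have hcn := cnt c.
  case: (lerP ((1 - p) * (x2 c)%:R - (x1 c)%:R) (cs * nR / 2)) => hd.
    have := Psi1 c hd; have : 0 <= nR * PhiF (x1 c)%:R (x2 c)%:R by apply: mulr_ge0; [clear -nR0; lra|].
    clear; lra.
  have x1ge : 1 <= (x1 c)%:R :> R by rewrite ler1n lt0n.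
  have pX2 : 0 <= p * (x2 c)%:R by apply: mulr_ge0.
  have X2pos : 0 < (x2 c)%:R :> R.
    have : 0 < cs * nR / 2 by rewrite divr_gt0 // mulr_gt0.
    clear -hd a b p1 pX2; nra.
  have : 1 <= nR * PhiF (x1 c)%:R (x2 c)%:R.
    rewrite /PhiF mulrA ler_pdivlMr // mul1r.
    have := cnt c; clear -x1ge a b d nR0; nra.
  have := Psi0 c; clear; lra.
have Ustep : forall t c, (t < K)%N -> x1 c != 0%N ->
    \sum_(c' : config n) usd_kernel p c c' * U t.+1 c' <= U t c.
  move=> t c tK hc.
  case: (lerP 1 (W t c)) => hW.
    rewrite /U (min_l hW).
    apply: (@le_trans _ _ (\sum_(c' : config n) usd_kernel p c c' * 1)); last first.
      by under eq_bigr do rewrite mulr1; rewrite kernel_sum1.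
    apply: ler_sum => c' _.
    apply: ler_wpM2l; first exact: kernel_ge0.
    by rewrite ge_min lexx.
  rewrite /U (min_r (ltW hW)).
  apply: (@le_trans _ _ (\sum_(c' : config n) usd_kernel p c c' * W t.+1 c')).
    apply: ler_sum => c' _; apply: ler_wpM2l; first exact: kernel_ge0.
    by rewrite /U ge_min lexx orbT.
  set A := nR * (1 - del) ^+ (K - t.+1)%N.
  set B := (1 + 4 * lam ^+ 2) ^+ (K - t.+1)%N.
  have -> : \sum_(c' : config n) usd_kernel p c c' * W t.+1 c' =
     Eform p (fun a b => A * PhiF a b + B * PsiF p lam cs nR a b)
        (x1 c)%:R (x2 c)%:R (xu c)%:R.
    by rewrite -(expect p c _ n1).
  rewrite Eform_lin.
  have [a b d] := pos c; have hcn := cnt c.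
  have Bt1 : 1 <= (1 + 4 * lam ^+ 2) ^+ (K - t)%N.
    by apply: exprn_ege1; have := sqr_ge0 lam; clear; lra.
  have good : cs * nR / 2 < (1 - p) * (x2 c)%:R - (x1 c)%:R.
    rewrite ltNge; apply/negP => hd.
    have h1 := Psi1 c hd.
    have : 1 <= (1 + 4 * lam ^+ 2) ^+ (K - t)%N * PsiF p lam cs nR (x1 c)%:R (x2 c)%:R.
      by have := ler_pM ler01 ler01 Bt1 h1; rewrite mulr1.
    have : 0 <= nR * (1 - del) ^+ (K - t)%N * PhiF (x1 c)%:R (x2 c)%:R.
      apply: mulr_ge0 => //; apply: mulr_ge0; first by clear -nR0; lra.
      by apply: exprn_ge0; clear -del1; lra.
    move: hW; rewrite /W; clear; lra.
  have hcs : 4 / cs <= cs * ((x1 c)%:R + (x2 c)%:R + (xu c)%:R) / 2 - 1.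
    rewrite hcn.
    have -> : cs * nR / 2 - 1 = 4 / cs + cs / 2 * (nR - 2 / cs * (1 + 4 / cs)) by field.
    rewrite lerDl; apply: mulr_ge0; [rewrite divr_ge0 //; exact: ltW | clear -hM1; lra].
  have hPhi := Phi_step hp cs0 a b d ltac:(rewrite hcn; exact: good) hcs.
  rewrite hcn -/del in hPhi.
  have S2 : 2 <= (x1 c)%:R + (x2 c)%:R + (xu c)%:R :> R by rewrite hcn; clear -n8; lra.
  have D0 : 0 <= (1 - p) * (x2 c)%:R - (x1 c)%:R.
    have : 0 < cs * nR / 2 by rewrite divr_gt0 // mulr_gt0.
    clear -good; lra.
  have lamh : 0 <= lam <= 1/2 by apply/andP; split.
  have hPsi := Psi_step cs nR hp lamh a b d S2 D0.
  have A0 : 0 <= A by rewrite /A; apply: mulr_ge0; [clear -nR0; lra | apply: exprn_ge0; clear -del1; lra].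
  have B0 : 0 <= B by rewrite /B; apply: exprn_ge0; have := sqr_ge0 lam; clear; lra.
  apply: le_trans (lerD (ler_wpM2l A0 hPhi) (ler_wpM2l B0 hPsi)) _.
  rewrite /W /A /B -(subnSK tK) !exprS.
  rewrite le_eqVlt; apply/orP; left; apply/eqP; ring.
have hsup := super hp U0 UK Ustep c0 (leqnn K).
rewrite subnn in hsup.
rewrite hit_eq //.
have [a b d] := pos c0; have hcn := cnt c0.
have Ph0 : PhiF (x1 c0)%:R (x2 c0)%:R <= nR.
  rewrite /PhiF; have x1n : (x1 c0)%:R <= nR :> R by clear -a b d hcn; lra.
  have [->|x2n] := eqVneq (x2 c0) 0%N; first by rewrite invr0 mulr0; clear -nR0; lra.
  have x21 : 1 <= (x2 c0)%:R :> R by rewrite ler1n lt0n.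
  rewrite ler_pdivrMr; last by clear -x21; lra.
  by clear -x1n x21 a; nra.
have Ps0 : PsiF p lam cs nR (x1 c0)%:R (x2 c0)%:R <= expR (- (lam * cs * nR / 2)).
  rewrite /PsiF ler_expR; clear -hD lam0; nra.
have t1 := term1 n8 cs0 cs1 del1 del_lo (erefl L) hKcs2 (Phi0 c0) Ph0.
have lnsq : (60 * 64) * L ^+ 2 <= cs ^+ 3 * nR.
  by apply: lnsq_bound => //; clear -n8; lra.
have t2 := term2 n8 cs0 K0 (erefl lam) (erefl L) hKcs lnsq (ltW (Psi0 c0)) Ps0.
have hW0 : W 0%N c0 <= (nR ^+ 2)^-1.
  rewrite /W subn0.
  have -> : (nR ^+ 2)^-1 = (2 * nR ^+ 2)^-1 + (2 * nR ^+ 2)^-1 by field; rewrite gt_eqF.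
  exact: lerD t1 t2.
have hU0 : U 0%N c0 <= W 0%N c0 by rewrite /U ge_min lexx orbT.
rewrite lerD2l lerN2.
exact: le_trans hsup (le_trans hU0 hW0).
Qed.
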